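(* Let $\pi=\langle t,a,b\mid t^{-1}at=a^2,\ t^{-1}b^2t=b\rangle$ and let $\phi\colon\pi\to\mathbb{Z}$ be the epimorphism with $\phi(t)=1$ and $\phi(a)=\phi(b)=0$ (a generator of $H^1(\pi;\mathbb{Z})\cong\mathbb{Z}$). Then $\operatorname{rg}(\pi,\phi)=0$, but $\pi$ cannot be written as an ascending or descending HNN extension of a finitely generated group compatible with $\phi$ (i.e. as $\langle B,t'\mid t'^{-1}A_+t'=A_-\rangle$ with $B$ finitely generated, $A_+=B$ or $A_-=B$, $\phi(t')=1$ and $\phi(B)=0$).
   Context: For a group $H$, $\operatorname{rk}(H)$ is the minimal number of generators. For finitely generated $G$ and a surjective homomorphism $\phi\colon G\to\mathbb{Z}$, with $G_i=\operatorname{Ker}(G\xrightarrow{\phi}\mathbb{Z}\to\mathbb{Z}/i)$, the rank gradient is $\operatorname{rg}(G,\phi)=\liminf_{i\to\infty}\frac{\operatorname{rk}(G_i)}{[G:G_i]}$. An HNN extension $\langle B,t\mid t^{-1}A_+t=A_-\rangle$ with $A_\pm\leq B$ is ascending if $A_+=B$ and descending if $A_-=B$. *)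

(* Defs.v *)
From Stdlib Require Import Reals ZArith List Classical ClassicalEpsilon.
Open Scope R_scope.

Record Group := {
  carrier :> Type;
  gmul : carrier -> carrier -> carrier;
  gone : carrier;
  ginv : carrier -> carrier;
  gmul_assoc : forall x y z, gmul x (gmul y z) = gmul (gmul x y) z;
  gmul_1l : forall x, gmul gone x = x;
  gmul_1r : forall x, gmul x gone = x;
  gmul_Vl : forall x, gmul (ginv x) x = gone;
  gmul_Vr : forall x, gmul x (ginv x) = gone
}.
Arguments gmul {_} _ _.
Arguments gone {_}.
Arguments ginv {_} _.

Record Hom (G K : Group) := {
  hfun :> G -> K;
  hmul : forall x y, hfun (gmul x y) = gmul (hfun x) (hfun y)
}.
Arguments hfun {_ _} _ _.

Definition Zgroup : Group :=
  {| carrier := Z; gmul := Z.add; gone := 0%Z; ginv := Z.opp;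
     gmul_assoc := Z.add_assoc; gmul_1l := Z.add_0_l; gmul_1r := Z.add_0_r;
     gmul_Vl := Z.add_opp_diag_l; gmul_Vr := Z.add_opp_diag_r |}.

Definition is_subgroup {G : Group} (H : G -> Prop) : Prop :=
  H gone /\ (forall x y, H x -> H y -> H (gmul x y)) /\ (forall x, H x -> H (ginv x)).

Inductive gen {G : Group} (S : G -> Prop) : G -> Prop :=
| gen_in : forall s, S s -> gen S s
| gen_one : gen S gone
| gen_mul : forall x y, gen S x -> gen S y -> gen S (gmul x y)
| gen_inv : forall x, gen S x -> gen S (ginv x).

Definition generated_by {G : Group} (H : G -> Prop) (l : list G) : Prop :=
  forall x, H x <-> gen (fun y => In y l) x.

Definition finitely_generated {G : Group} (H : G -> Prop) : Prop :=
  exists l : list G, generated_by H l.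

Definition gen_by_n {G : Group} (H : G -> Prop) (n : nat) : Prop :=
  exists l : list G, length l = n /\ generated_by H l.

Definition is_rank {G : Group} (H : G -> Prop) (n : nat) : Prop :=
  gen_by_n H n /\ forall m, gen_by_n H m -> (n <= m)%nat.

(* rk H as an extended natural number: None = infinity (not f.g.) *)
Definition rk {G : Group} (H : G -> Prop) : option nat :=
  match excluded_middle_informative (exists n, is_rank H n) with
  | left p => Some (proj1_sig (constructive_indefinite_description _ p))
  | right _ => None
  end.

Definition liminf_is (u : nat -> option R) (l : R) : Prop :=
  forall eps, eps > 0 ->
    (exists N, forall n, (N <= n)%nat ->
        match u n with None => True | Some r => l - eps < r end) /\
    (forall N, exists n, (N <= n)%nat /\ exists r, u n = Some r /\ r < l + eps).

Definition Gi {G : Group} (phi : Hom G Zgroup) (i : nat) : G -> Prop :=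
  fun g => Z.divide (Z.of_nat i) (phi g).

(* rk(G_i)/[G:G_i]; for phi surjective and i >= 1, [G:G_i] = i *)
Definition rg_seq {G : Group} (phi : Hom G Zgroup) (i : nat) : option R :=
  match rk (Gi phi i) with
  | Some n => Some (INR n / INR i)
  | None => None
  end.

Definition rank_gradient_is {G : Group} (phi : Hom G Zgroup) (l : R) : Prop :=
  liminf_is (rg_seq phi) l.

(* P with elements t a b is a presentation of
   < t, a, b | t^-1 a t = a^2, t^-1 b^2 t = b > *)
Definition pi_relations {K : Group} (t a b : K) : Prop :=
  gmul (gmul (ginv t) a) t = gmul a a /\
  gmul (gmul (ginv t) (gmul b b)) t = b.

Definition is_pi_presentation (P : Group) (t a b : P) : Prop :=
  pi_relations t a b /\
  forall (K : Group) (x y z : K), pi_relations x y z ->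
    exists F : Hom P K, F t = x /\ F a = y /\ F b = z /\
      forall F' : Hom P K, F' t = x -> F' a = y -> F' b = z ->
        forall g, F' g = F g.

(* G is (internally) the HNN extension < B, s | s^-1 Ap s = Am > :
   B, Ap, Am subgroups, Ap, Am <= B, s^-1 Ap s = Am, and the natural map
   from the abstract HNN extension to G is an isomorphism, expressed by the
   universal property of the HNN extension. *)
Definition is_HNN (G : Group) (B Ap Am : G -> Prop) (s : G) : Prop :=
  is_subgroup B /\ is_subgroup Ap /\ is_subgroup Am /\
  (forall x, Ap x -> B x) /\ (forall x, Am x -> B x) /\
  (forall x, Am x <-> exists y, Ap y /\ x = gmul (gmul (ginv s) y) s) /\
  forall (K : Group) (f : G -> K) (k : K),
    (forall x y, B x -> B y -> f (gmul x y) = gmul (f x) (f y)) ->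
    (forall x, Ap x -> gmul (gmul (ginv k) (f x)) k = f (gmul (gmul (ginv s) x) s)) ->
    exists F : Hom G K, (forall x, B x -> F x = f x) /\ F s = k /\
      forall F' : Hom G K, (forall x, B x -> F' x = f x) -> F' s = k ->
        forall g, F' g = F g.

Definition asc_or_desc_HNN_compatible (G : Group) (phi : Hom G Zgroup) : Prop :=
  exists (B Ap Am : G -> Prop) (s : G),
    is_HNN G B Ap Am s /\ finitely_generated B /\
    ((forall x, Ap x <-> B x) \/ (forall x, Am x <-> B x)) /\
    phi s = 1%Z /\ (forall x, B x -> phi x = 0%Z).

(* Main.v *)
Require Import Defs.
From Stdlib Require Import Reals ZArith List Lia Lra Classical ClassicalEpsilon ProofIrrelevance.

Section GL.
Variable G : Group.

Lemma inv_unique (x y : G) : gmul x y = gone -> y = ginv x.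
Proof. intro H. rewrite <- (gmul_1l G y), <- (gmul_Vl G x), <- gmul_assoc, H, gmul_1r. reflexivity. Qed.

Lemma inv_inv (x : G) : ginv (ginv x) = x.
Proof. symmetry. apply inv_unique. apply gmul_Vl. Qed.

Lemma inv_mul (x y : G) : ginv (gmul x y) = gmul (ginv y) (ginv x).
Proof. symmetry. apply inv_unique.
  rewrite gmul_assoc, <- (gmul_assoc G x y (ginv y)), gmul_Vr, gmul_1r, gmul_Vr. reflexivity. Qed.

Lemma inv_one : ginv (@gone G) = gone.
Proof. symmetry. apply inv_unique. apply gmul_1l. Qed.

Lemma cancel_l (x y z : G) : gmul x y = gmul x z -> y = z.
Proof. intro H. rewrite <- (gmul_1l G y), <- (gmul_1l G z), <- (gmul_Vl G x), <- !gmul_assoc, H. reflexivity. Qed.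

Definition conj (g x : G) : G := gmul (gmul (ginv g) x) g.

Lemma conj_mul (g x y : G) : conj g (gmul x y) = gmul (conj g x) (conj g y).
Proof. unfold conj. rewrite !gmul_assoc, <- (gmul_assoc G _ g (ginv g)), gmul_Vr, gmul_1r. reflexivity. Qed.

Lemma conj_inv (g x : G) : conj g (ginv x) = ginv (conj g x).
Proof. unfold conj. rewrite !inv_mul, inv_inv, gmul_assoc. reflexivity. Qed.

Lemma conj_one_l (x : G) : conj gone x = x.
Proof. unfold conj. rewrite inv_one, gmul_1l, gmul_1r. reflexivity. Qed.

Lemma conj_one_r (g : G) : conj g gone = gone.
Proof. unfold conj. rewrite gmul_1r, gmul_Vl. reflexivity. Qed.

Lemma conj_self (g : G) : conj g g = g.
Proof. unfold conj. rewrite gmul_Vl, gmul_1l. reflexivity. Qed.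

Lemma conj_comp (g h x : G) : conj (gmul g h) x = conj h (conj g x).
Proof. unfold conj. rewrite inv_mul, !gmul_assoc. reflexivity. Qed.

Fixpoint npow (g : G) (n : nat) : G :=
  match n with O => gone | S n => gmul g (npow g n) end.

Lemma npow_add (g : G) m n : npow g (m + n) = gmul (npow g m) (npow g n).
Proof. induction m; simpl. rewrite gmul_1l; reflexivity. rewrite IHm, gmul_assoc; reflexivity. Qed.

Lemma npow_S_r (g : G) n : npow g (S n) = gmul (npow g n) g.
Proof. replace (S n) with (n + 1)%nat by lia. rewrite npow_add. simpl. rewrite gmul_1r. reflexivity. Qed.

Lemma npow_comm (g : G) n : gmul g (npow g n) = gmul (npow g n) g.
Proof. rewrite <- npow_S_r. reflexivity. Qed.

End GL.

Arguments conj {G} _ _.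
Arguments npow {G} _ _.

Section HL.
Variables G K : Group.
Variable F : Hom G K.

Lemma hom_one : F gone = gone.
Proof. apply (cancel_l K (F gone)). rewrite <- hmul, !gmul_1r. reflexivity. Qed.

Lemma hom_inv x : F (ginv x) = ginv (F x).
Proof. apply inv_unique. rewrite <- hmul, gmul_Vr. apply hom_one. Qed.

Lemma hom_conj g x : F (conj g x) = conj (F g) (F x).
Proof. unfold conj. rewrite !hmul, hom_inv. reflexivity. Qed.

Lemma hom_npow g n : F (npow g n) = npow (F g) n.
Proof. induction n; simpl. apply hom_one. rewrite hmul, IHn. reflexivity. Qed.
End HL.
Section Sub.
Variable G : Group.
Variable S : G -> Prop.
Definition subT := {x : G | gen S x}.
Lemma sub_eq (x y : subT) : proj1_sig x = proj1_sig y -> x = y.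
Proof. destruct x, y; simpl; intro; subst. f_equal. apply proof_irrelevance. Qed.
Definition smul (x y : subT) : subT := exist _ (gmul (proj1_sig x) (proj1_sig y)) (gen_mul S _ _ (proj2_sig x) (proj2_sig y)).
Definition sone : subT := exist _ gone (gen_one S).
Definition sinv (x : subT) : subT := exist _ (ginv (proj1_sig x)) (gen_inv S _ (proj2_sig x)).
Definition SubG : Group.
refine {| carrier := subT; gmul := smul; gone := sone; ginv := sinv |}.
- intros; apply sub_eq; simpl; apply gmul_assoc.
- intros; apply sub_eq; simpl; apply gmul_1l.
- intros; apply sub_eq; simpl; apply gmul_1r.
- intros; apply sub_eq; simpl; apply gmul_Vl.
- intros; apply sub_eq; simpl; apply gmul_Vr.
Defined.
Definition incl : Hom SubG G := {| hfun := fun x : SubG => proj1_sig x; hmul := fun x y => eq_refl |}.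
End Sub.

Definition gens3 {G : Group} (t a b : G) : G -> Prop := fun y => y = t \/ y = a \/ y = b.

Lemma hom_rel {G K : Group} (F : Hom G K) (t a b : G) : pi_relations t a b -> pi_relations (F t) (F a) (F b).
Proof. intros [H1 H2]. split.
 - rewrite <- hom_inv, <- !hmul, H1. reflexivity.
 - rewrite <- hom_inv, <- !hmul, H2. reflexivity.
Qed.

Lemma gen_all (P : Group) (t a b : P) : is_pi_presentation P t a b -> forall g, gen (gens3 t a b) g.
Proof.
  intros [Hr HU] g.
  set (S := gens3 t a b).
  pose (tt' := exist (gen S) t (gen_in S t (or_introl eq_refl)) : SubG P S).
  pose (aa := exist (gen S) a (gen_in S a (or_intror (or_introl eq_refl))) : SubG P S).
  pose (bb := exist (gen S) b (gen_in S b (or_intror (or_intror eq_refl))) : SubG P S).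
  assert (Hr' : pi_relations tt' aa bb).
  { destruct Hr as [H1 H2]. split; apply sub_eq; simpl; assumption. }
  destruct (HU _ _ _ _ Hr') as [F [Ft [Fa [Fb _]]]].
  destruct (HU P t a b Hr) as [F0 [_ [_ [_ U]]]].
  pose (C := {| hfun := fun x => proj1_sig (F x); hmul := fun x y => f_equal (@proj1_sig _ _) (hmul _ _ F x y) |} : Hom P P).
  pose (I := {| hfun := fun x : P => x; hmul := fun x y => eq_refl |} : Hom P P).
  assert (E1 : C g = F0 g) by (apply U; simpl; [rewrite Ft|rewrite Fa|rewrite Fb]; reflexivity).
  assert (E2 : I g = F0 g) by (apply U; reflexivity).
  simpl in E1, E2. assert (E3 : g = proj1_sig (F g)) by congruence. rewrite E3. apply (proj2_sig (F g)).
Qed.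

Lemma homs_agree (P : Group) (t a b : P) (K : Group) (F1 F2 : Hom P K) :
  is_pi_presentation P t a b -> F1 t = F2 t -> F1 a = F2 a -> F1 b = F2 b -> forall g, F1 g = F2 g.
Proof.
  intros HP Ht Ha Hb g. induction (gen_all P t a b HP g).
  - destruct H as [->|[->| ->]]; assumption.
  - rewrite !hom_one; reflexivity.
  - rewrite !hmul, IHg0_1, IHg0_2; reflexivity.
  - rewrite !hom_inv, IHg0; reflexivity.
Qed.
Lemma comm_inv {G : Group} (x y : G) : gmul x y = gmul y x -> gmul (ginv x) y = gmul y (ginv x).
Proof. intro H. apply (cancel_l G x). rewrite !gmul_assoc, gmul_Vr, gmul_1l, H, <- gmul_assoc, gmul_Vr, gmul_1r. reflexivity. Qed.

Lemma conj_shift {G : Group} (g x y : G) : gmul (conj g x) (gmul (ginv g) y) = gmul (ginv g) (gmul x y).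
Proof. unfold conj. rewrite !gmul_assoc, <- (gmul_assoc G _ g (ginv g)), gmul_Vr, gmul_1r. reflexivity. Qed.

Lemma phi_npow {P : Group} (phi : Hom P Zgroup) g n : phi (npow g n) = (Z.of_nat n * phi g)%Z.
Proof. induction n; simpl npow. apply hom_one. rewrite hmul, IHn.
  change (Z.add (phi g) (Z.of_nat n * phi g) = Z.of_nat (S n) * phi g)%Z. lia. Qed.

Lemma phi_conj {P : Group} (phi : Hom P Zgroup) g x : phi (conj g x) = phi x.
Proof. rewrite hom_conj. unfold conj. simpl. lia. Qed.

Section Rank.
Variables (P : Group) (t a b : P) (phi : Hom P Zgroup).
Hypothesis HP : is_pi_presentation P t a b.
Hypothesis Ht : phi t = 1%Z.
Hypothesis Ha : phi a = 0%Z.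
Hypothesis Hb : phi b = 0%Z.
Variable i : nat.
Hypothesis Hi1 : (1 <= i)%nat.

Definition uu := conj (ginv (npow t (i-1))) a.
Definition vv := conj (npow t (i-1)) b.
Definition Hs := gen (fun y => In y (npow t i :: uu :: vv :: nil)).

Lemma R1 : conj t a = gmul a a. Proof. destruct HP as [[H _] _]. exact H. Qed.
Lemma R2 : conj t (gmul b b) = b. Proof. destruct HP as [[_ H] _]. exact H. Qed.

Lemma conj_t_u : conj t uu = gmul uu uu.
Proof. unfold uu. rewrite <- conj_comp, comm_inv by (symmetry; apply npow_comm).
  rewrite conj_comp, R1, conj_mul. reflexivity. Qed.

Lemma w_in n : Hs (conj (npow t n) uu).
Proof. induction n.
  - simpl. rewrite conj_one_l. apply gen_in. simpl; auto.
  - simpl npow. rewrite conj_comp, conj_t_u, conj_mul. apply gen_mul; assumption. Qed.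

Lemma ca_in r : Hs (conj (npow t r) a).
Proof. assert (E : a = conj (npow t (i-1)) uu).
  { unfold uu. rewrite <- conj_comp, gmul_Vl, conj_one_l. reflexivity. }
  rewrite E, <- conj_comp, <- npow_add. apply w_in. Qed.

Lemma d_sq k : gmul (conj (npow t (S k)) b) (conj (npow t (S k)) b) = conj (npow t k) b.
Proof. rewrite <- conj_mul. simpl npow. rewrite conj_comp, R2. reflexivity. Qed.

Lemma cb_in r : (r < i)%nat -> Hs (conj (npow t r) b).
Proof. intro Hr.
  assert (forall j, (j <= i-1)%nat -> Hs (conj (npow t (i-1-j)) b)).
  { induction j; intro Hj.
    - replace (i-1-0)%nat with (i-1)%nat by lia. apply gen_in. simpl; auto.
    - rewrite <- d_sq. replace (S (i-1-S j)) with (i-1-j)%nat by lia.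
      apply gen_mul; apply IHj; lia. }
  replace r with (i-1-(i-1-r))%nat by lia. apply H. lia. Qed.

Definition Sx (x : P) := exists r, (r < i)%nat /\ Hs (gmul (ginv (npow t r)) x).

Lemma S_conj (g y : P) : (forall r, (r < i)%nat -> Hs (conj (npow t r) g)) -> Sx y -> Sx (gmul g y) /\ Sx (gmul (ginv g) y).
Proof. intros Hg [r [Hr Hy]]. split; exists r; split; auto.
  - rewrite <- conj_shift. apply gen_mul; auto. apply Hg; auto.
  - rewrite <- conj_shift, conj_inv. apply gen_mul; auto. apply gen_inv; apply Hg; auto. Qed.

Lemma S_t y : Sx y -> Sx (gmul t y) /\ Sx (gmul (ginv t) y).
Proof. intros [r [Hr Hy]]. split.
  - destruct (Nat.eq_dec (S r) i) as [E|E].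
    + exists 0%nat. split. lia. simpl. rewrite inv_one, gmul_1l.
      replace (gmul t y) with (gmul (npow t i) (gmul (ginv (npow t r)) y)).
      apply gen_mul; auto. apply gen_in; simpl; auto.
      rewrite <- E. simpl. rewrite <- !gmul_assoc, (gmul_assoc P (npow t r)), gmul_Vr, gmul_1l. reflexivity.
    + exists (S r). split. lia. simpl. rewrite inv_mul, <- gmul_assoc, (gmul_assoc P (ginv t)), gmul_Vl, gmul_1l. exact Hy.
  - destruct r as [|r].
    + exists (i-1)%nat. split. lia. simpl in Hy. rewrite inv_one, gmul_1l in Hy.
      rewrite gmul_assoc, <- inv_mul. replace (gmul t (npow t (i-1))) with (npow t i).
      apply gen_mul; auto. apply gen_inv, gen_in; simpl; auto.
      replace i with (S (i-1)) at 1 by lia. reflexivity.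
    + exists r. split. lia. rewrite gmul_assoc, <- inv_mul. exact Hy. Qed.

Lemma S_all x : Sx x.
Proof.
  assert (T : forall g, forall y, Sx y <-> Sx (gmul g y)).
  { intro g. induction (gen_all P t a b HP g).
    - assert (C : forall y, Sx y -> Sx (gmul s y) /\ Sx (gmul (ginv s) y)).
      { destruct H as [->|[->| ->]]. apply S_t. intro y0; apply S_conj; intros; apply ca_in. intro y0; apply S_conj; apply cb_in. }
      intro y; split; intro Hy. apply C; auto.
      rewrite <- (gmul_1l P y), <- (gmul_Vl P s), <- gmul_assoc. apply C; auto.
    - intro yy. rewrite gmul_1l. tauto.
    - intro yy. rewrite <- gmul_assoc, <- IHg0_1, <- IHg0_2. tauto.
    - intro yy. rewrite (IHg0 (gmul (ginv x0) yy)), gmul_assoc, gmul_Vr, gmul_1l. tauto. }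
  rewrite <- (gmul_1r P x). apply T. exists 0%nat. split. lia. simpl. rewrite inv_one, gmul_1l. apply gen_one.
Qed.

Lemma Hs_Gi x : Hs x -> Gi phi i x.
Proof. unfold Gi. intro H; induction H.
  - simpl in H. destruct H as [<-|[<-|[<-|[]]]].
    + rewrite phi_npow, Ht. exists 1%Z. lia.
    + unfold uu. rewrite phi_conj, Ha. exists 0%Z. lia.
    + unfold vv. rewrite phi_conj, Hb. exists 0%Z. lia.
  - rewrite hom_one. exists 0%Z. simpl. lia.
  - rewrite hmul. simpl. apply Z.divide_add_r; auto.
  - rewrite hom_inv. simpl. apply Z.divide_opp_r; auto.
Qed.

Lemma Gi_gen : generated_by (Gi phi i) (npow t i :: uu :: vv :: nil).
Proof. intro x. split. 2: apply Hs_Gi.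
  intro Hx. destruct (S_all x) as [r [Hr Hh]].
  assert (Hg := Hs_Gi _ Hh). unfold Gi in Hg, Hx.
  rewrite hmul, hom_inv, phi_npow, Ht in Hg. simpl in Hg.
  assert (Hd : Z.divide (Z.of_nat i) (Z.of_nat r)).
  { replace (Z.of_nat r) with (phi x - (- (Z.of_nat r * 1) + phi x))%Z by lia.
    apply Z.divide_sub_r; auto. }
  destruct r. simpl in Hh. rewrite inv_one, gmul_1l in Hh. exact Hh.
  apply Z.divide_pos_le in Hd; lia.
Qed.
End Rank.
Lemma min_exists (Q : nat -> Prop) k : Q k -> exists n, Q n /\ forall m, Q m -> (n <= m)%nat.
Proof.
  induction k as [k IH] using (well_founded_induction lt_wf). intro Hk.
  destruct (classic (exists m, (m < k)%nat /\ Q m)) as [[m [Hm Qm]]|N].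
  - exact (IH m Hm Qm).
  - exists k. split; auto. intros m Qm. destruct (Nat.lt_ge_cases m k); auto. exfalso; eauto.
Qed.

Lemma rk_small (P : Group) (t a b : P) (phi : Hom P Zgroup) :
  is_pi_presentation P t a b -> phi t = 1%Z -> phi a = 0%Z -> phi b = 0%Z ->
  forall i, (1 <= i)%nat -> exists n, rk (Gi phi i) = Some n /\ (n <= 3)%nat.
Proof.
  intros HP Ht Ha Hb i Hi.
  assert (G3 : gen_by_n (Gi phi i) 3).
  { exists (npow t i :: uu P t a i :: vv P t b i :: nil). split. reflexivity. apply Gi_gen; auto. }
  unfold rk. destruct (excluded_middle_informative _) as [p|np].
  - destruct (constructive_indefinite_description _ p) as [n Hn]. simpl. exists n. split; auto. apply Hn; auto.
  - exfalso. destruct (min_exists _ _ G3) as [n [H1 H2]]. apply np. exists n. split; auto.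
Qed.

Lemma rg_zero (P : Group) (t a b : P) (phi : Hom P Zgroup) :
  is_pi_presentation P t a b -> phi t = 1%Z -> phi a = 0%Z -> phi b = 0%Z ->
  rank_gradient_is phi 0%R.
Proof.
  intros HP Ht Ha Hb eps Heps. split.
  - exists 1%nat. intros n Hn. unfold rg_seq. destruct (rk (Gi phi n)); auto.
    assert (0 < INR n)%R by (apply lt_0_INR; lia).
    assert (0 <= INR n0 / INR n)%R.
    { unfold Rdiv. apply Rmult_le_pos. apply pos_INR. left. apply Rinv_0_lt_compat; auto. }
    lra.
  - intro N. destruct (archimed_cor1 eps Heps) as [N0 [HN0 HN0p]].
    exists (N + 3 * N0)%nat. split. lia.
    destruct (rk_small P t a b phi HP Ht Ha Hb (N + 3 * N0)%nat ltac:(lia)) as [k [Hk Hk3]].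
    unfold rg_seq. rewrite Hk. eexists. split. reflexivity.
    assert (A1 : (INR k <= 3)%R) by (apply le_INR in Hk3; simpl in Hk3; lra).
    assert (A2 : (3 * INR N0 <= INR (N + 3 * N0))%R).
    { rewrite plus_INR, mult_INR. simpl. assert (0 <= INR N)%R by apply pos_INR. lra. }
    assert (A3 : (0 < INR N0)%R) by (apply lt_0_INR; lia).
    assert (A4 : (1 < eps * INR N0)%R).
    { apply (Rmult_lt_compat_r (INR N0)) in HN0; auto. rewrite Rinv_l in HN0; lra. }
    set (D := INR (N + 3 * N0)) in *.
    assert (A5 : (0 < D)%R) by lra.
    apply (Rmult_lt_reg_r D); auto. unfold Rdiv. rewrite Rmult_assoc, Rinv_l by lra.
    rewrite Rplus_0_l. nra.
Qed.
Definition qmul (p q : R * Z) : R * Z := ((fst p + powerRZ 2 (snd p) * fst q)%R, (snd p + snd q)%Z).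
Definition qinv (p : R * Z) : R * Z := ((- (powerRZ 2 (- snd p) * fst p))%R, (- snd p)%Z).
Lemma two_nz : (2 <> 0)%R. Proof. lra. Qed.

Definition Q1 : Group.
refine {| carrier := (R * Z)%type; gmul := qmul; gone := (0%R, 0%Z); ginv := qinv |}.
- intros [r1 n1] [r2 n2] [r3 n3]; unfold qmul; simpl. f_equal. rewrite powerRZ_add by apply two_nz. ring. lia.
- intros [r n]; unfold qmul; simpl. f_equal. ring.
- intros [r n]; unfold qmul; simpl. f_equal. ring. lia.
- intros [r n]; unfold qmul, qinv; simpl. f_equal. ring. lia.
- intros [r n]; unfold qmul, qinv; simpl. f_equal. 
  rewrite Rmult_opp_opp || idtac. replace (r + powerRZ 2 n * - (powerRZ 2 (- n) * r))%R with (r - (powerRZ 2 (n + - n)) * r)%R.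
  replace (n + - n)%Z with 0%Z by lia. simpl. ring.
  rewrite powerRZ_add by apply two_nz. ring. lia.
Defined.

Definition is_int (r : R) := exists z, r = IZR z.
Definition dy (y : R) := exists m : nat, is_int (y * 2 ^ m).

Lemma is_int_plus x y : is_int x -> is_int y -> is_int (x + y).
Proof. intros [a ->] [b ->]. exists (a + b)%Z. rewrite plus_IZR. reflexivity. Qed.
Lemma is_int_mult x y : is_int x -> is_int y -> is_int (x * y).
Proof. intros [a ->] [b ->]. exists (a * b)%Z. rewrite mult_IZR. reflexivity. Qed.
Lemma is_int_opp x : is_int x -> is_int (- x).
Proof. intros [a ->]. exists (- a)%Z. rewrite opp_IZR. reflexivity. Qed.
Lemma is_int_pow2 k : is_int (2 ^ k).
Proof. exists (2 ^ Z.of_nat k)%Z. rewrite <- pow_IZR. reflexivity. Qed.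
Lemma is_int_shift y m k : is_int (y * 2 ^ m) -> is_int (y * 2 ^ (m + k)).
Proof. intro H. rewrite pow_add, <- Rmult_assoc. apply is_int_mult; auto. apply is_int_pow2. Qed.

Lemma pow2_nz k : (2 ^ k <> 0)%R. Proof. apply pow_nonzero. lra. Qed.

Lemma dy_plus x y : dy x -> dy y -> dy (x + y).
Proof. intros [m1 H1] [m2 H2]. exists (m1 + m2)%nat.
  rewrite Rmult_plus_distr_r. apply is_int_plus. apply is_int_shift; auto.
  rewrite Nat.add_comm. apply is_int_shift; auto. Qed.
Lemma dy_opp x : dy x -> dy (- x).
Proof. intros [m H]. exists m. replace (- x * 2 ^ m)%R with (- (x * 2 ^ m))%R by ring. apply is_int_opp; auto. Qed.
Lemma dy_pow x n : dy x -> dy (powerRZ 2 n * x).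
Proof. intros [m H]. destruct n as [|p|p]; simpl.
  - exists m. rewrite Rmult_1_l. auto.
  - exists m. rewrite Rmult_assoc. apply is_int_mult; auto. apply is_int_pow2.
  - exists (m + Pos.to_nat p)%nat. rewrite pow_add.
    replace (/ 2 ^ Pos.to_nat p * x * (2 ^ m * 2 ^ Pos.to_nat p))%R with (x * 2 ^ m)%R. auto.
    field. apply pow2_nz.
Qed.

Lemma Z_div_all z0 : (forall K : nat, exists zK, z0 = (zK * 2 ^ Z.of_nat K)%Z) -> z0 = 0%Z.
Proof. intro H. destruct (H (Z.to_nat (Z.abs z0))) as [zK HK].
  rewrite Z2Nat.id in HK by lia.
  assert (L := Z.pow_gt_lin_r 2 (Z.abs z0) ltac:(lia) ltac:(lia)).
  set (w := (2 ^ Z.abs z0)%Z) in *.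
  destruct (Z.eq_dec zK 0) as [e|e]. rewrite e in HK; lia.
  exfalso. assert (Z.abs z0 = Z.abs zK * w)%Z. { rewrite HK, Z.abs_mul. f_equal. apply Z.abs_eq. lia. }
  nia.
Qed.
Lemma bound_list (P : Group) (f : P -> R) (l : list P) :
  (forall y, In y l -> dy (f y)) -> exists M, forall y, In y l -> is_int (f y * 2 ^ M).
Proof. induction l as [|x l IH]; intro H.
  - exists 0%nat. intros y [].
  - destruct IH as [M HM]. intros; apply H; simpl; auto.
    destruct (H x (or_introl eq_refl)) as [m Hm].
    exists (M + m)%nat. intros y [<-|Hy].
    + rewrite Nat.add_comm. apply is_int_shift; auto.
    + apply is_int_shift; auto.
Qed.

Lemma halving (P : Group) (psi : Hom P Q1) (B : P -> Prop) (l : list P) (h : P -> P) :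
  generated_by B l ->
  (forall x, dy (fst (psi x))) ->
  (forall x, B x -> snd (psi x) = 0%Z) ->
  (forall x, B x -> B (h x)) ->
  (forall x, B x -> fst (psi (h x)) = (fst (psi x) / 2)%R) ->
  forall x, B x -> psi x = (0%R, 0%Z).
Proof.
  intros Hgen Hdy Hsnd Hh Hhalf.
  destruct (bound_list P (fun y => fst (psi y)) l (fun y _ => Hdy y)) as [M HM].
  assert (Hall : forall x, B x -> is_int (fst (psi x) * 2 ^ M)).
  { intros x Bx. apply Hgen in Bx.
    assert (snd (psi x) = 0%Z /\ is_int (fst (psi x) * 2 ^ M)); [|tauto].
    induction Bx.
    - split; auto. apply Hsnd, Hgen, gen_in; auto.
    - rewrite hom_one. simpl. split; auto. exists 0%Z. simpl. ring.
    - rewrite hmul. destruct (psi x) as [r1 n1], (psi y) as [r2 n2]. simpl in *.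
      destruct IHBx1 as [-> I1], IHBx2 as [-> I2]. split. reflexivity.
      simpl. rewrite Rmult_1_l, Rmult_plus_distr_r. apply is_int_plus; auto.
    - rewrite hom_inv. destruct (psi x) as [r n]. simpl in *. destruct IHBx as [-> I].
      split. reflexivity. simpl. replace (- (1 * r) * 2 ^ M)%R with (- (r * 2 ^ M))%R by ring.
      apply is_int_opp; auto. }
  assert (Hit : forall K x, B x -> B (Nat.iter K h x) /\ (fst (psi (Nat.iter K h x)) * 2 ^ K = fst (psi x))%R).
  { induction K; intros x Bx; simpl. split; auto. ring.
    destruct (IHK x Bx) as [B1 E1]. split; auto. rewrite Hhalf by auto. rewrite <- E1. field. }
  intros x Bx. destruct (Hall x Bx) as [z0 Hz0].
  assert (z0 = 0%Z).
  { apply Z_div_all. intro K. destruct (Hit K x Bx) as [B1 E1]. destruct (Hall _ B1) as [zK HzK].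
    exists zK. apply eq_IZR. rewrite mult_IZR, <- Hz0, <- pow_IZR, <- HzK, <- E1. simpl. ring. }
  subst. simpl in Hz0. assert (fst (psi x) = 0%R).
  { apply (Rmult_eq_reg_r (2 ^ M)). rewrite Hz0. ring. apply pow2_nz. }
  specialize (Hsnd x Bx). destruct (psi x); simpl in *; subst; reflexivity.
Qed.
Lemma dy_all (P : Group) (t a b : P) (psi : Hom P Q1) : is_pi_presentation P t a b ->
  dy (fst (psi t)) -> dy (fst (psi a)) -> dy (fst (psi b)) -> forall x, dy (fst (psi x)).
Proof. intros HP H1 H2 H3 x. induction (gen_all P t a b HP x).
  - destruct H as [->|[->| ->]]; auto.
  - rewrite hom_one. exists 0%nat, 0%Z. simpl. ring.
  - rewrite hmul. destruct (psi x) as [r1 n1], (psi y) as [r2 n2]. simpl in *.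
    apply dy_plus; auto. apply dy_pow; auto.
  - rewrite hom_inv. destruct (psi x) as [r n]. simpl in *. apply dy_opp, dy_pow; auto.
Qed.

Lemma dy0 : dy 0. Proof. exists 0%nat, 0%Z. simpl. ring. Qed.
Lemma dy1 : dy 1. Proof. exists 0%nat, 1%Z. simpl. ring. Qed.

Definition negHom (P : Group) (phi : Hom P Zgroup) : Hom P Zgroup.
refine {| hfun := fun x => (Z.opp (phi x) : carrier Zgroup) |}.
intros x y. rewrite hmul. simpl. lia.
Defined.

Definition sndHom (P : Group) (psi : Hom P Q1) : Hom P Zgroup.
refine {| hfun := fun x => (snd (psi x) : carrier Zgroup) |}.
intros x y. rewrite hmul. reflexivity.
Defined.

Lemma not_HNN (P : Group) (t a b : P) (phi : Hom P Zgroup) :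
  is_pi_presentation P t a b ->
  phi t = 1%Z -> phi a = 0%Z -> phi b = 0%Z -> ~ asc_or_desc_HNN_compatible P phi.
Proof.
  intros HP Ht Ha Hb [B [Ap [Am [s [HH [[l Hl] [Hcase [Hs HB]]]]]]]].
  destruct HH as [_ [_ [_ [ApB [AmB [Hconj HU]]]]]].
  pose (F0 := negHom P phi).
  destruct Hcase as [Hasc|Hdesc].
  -
    assert (Rel : pi_relations (K := Q1) (0%R, 1%Z) (0%R, 0%Z) (1%R, 0%Z)).
    { split; simpl; unfold qmul, qinv; simpl; f_equal; field. }
    destruct HP as [HPr HPU]. destruct (HPU Q1 _ _ _ Rel) as [psi [Pt [Pa [Pb _]]]].
    assert (HP : is_pi_presentation P t a b) by (split; auto).
    pose (S1 := sndHom P psi).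
    assert (Esnd : forall x, snd (psi x) = phi x).
    { intro x. apply (homs_agree P t a b Zgroup S1 phi HP); simpl; [rewrite Pt, Ht|rewrite Pa, Ha|rewrite Pb, Hb]; reflexivity. }
    assert (Hdy : forall x, dy (fst (psi x))).
    { apply (dy_all P t a b psi HP); [rewrite Pt|rewrite Pa|rewrite Pb]; simpl; (apply dy0 || apply dy1). }
    destruct (psi s) as [sg sn] eqn:Es.
    assert (sn = 1%Z) by (rewrite <- Hs, <- Esnd, Es; reflexivity). subst sn.
    assert (Htriv : forall x, B x -> psi x = (0%R, 0%Z)).
    { apply (halving P psi B l (conj s) Hl Hdy).
      - intros x Bx. rewrite Esnd. auto.
      - intros x Bx. apply AmB, Hconj. exists x. split. apply Hasc; auto. reflexivity.
      - intros x Bx. rewrite hom_conj, Es. destruct (psi x) as [r n] eqn:Ex.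
        assert (n = 0%Z) by (rewrite <- (HB x Bx), <- Esnd, Ex; reflexivity). subst n.
        unfold conj; simpl; unfold qmul, qinv; simpl. field. }
    destruct (HU Q1 (fun x => psi x) (psi s)) as [F [_ [_ U]]].
    { intros; apply hmul. }
    { intros. rewrite !hmul, hom_inv. reflexivity. }
    pose (C := {| hfun := fun x => conj (psi s) (psi x);
                  hmul := fun x y => eq_trans (f_equal (conj (psi s)) (hmul _ _ psi x y)) (conj_mul Q1 _ _ _) |} : Hom P Q1).
    assert (E1 := U psi (fun _ _ => eq_refl) eq_refl b).
    assert (E2 := U C (fun x Bx => ltac:(simpl; rewrite (Htriv x Bx); apply (conj_one_r Q1))) (conj_self Q1 _) b).
    simpl in E2. rewrite <- E1, Pb, Es in E2. unfold conj in E2; simpl in E2; unfold qmul, qinv in E2; simpl in E2.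
    injection E2 as E2. field_simplify in E2. lra.
  -
    assert (Rel : pi_relations (K := Q1) (0%R, (-1)%Z) (1%R, 0%Z) (0%R, 0%Z)).
    { split; simpl; unfold qmul, qinv; simpl; f_equal; field. }
    destruct HP as [HPr HPU]. destruct (HPU Q1 _ _ _ Rel) as [psi [Pt [Pa [Pb _]]]].
    assert (HP : is_pi_presentation P t a b) by (split; auto).
    pose (S1 := sndHom P psi).
    assert (Esnd : forall x, snd (psi x) = (- phi x)%Z).
    { intro x. apply (homs_agree P t a b Zgroup S1 F0 HP); simpl; [rewrite Pt, Ht|rewrite Pa, Ha|rewrite Pb, Hb]; reflexivity. }
    assert (Hdy : forall x, dy (fst (psi x))).
    { apply (dy_all P t a b psi HP); [rewrite Pt|rewrite Pa|rewrite Pb]; simpl; (apply dy0 || apply dy1). }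
    destruct (psi s) as [sg sn] eqn:Es.
    assert (sn = (-1)%Z) by (specialize (Esnd s); rewrite Es, Hs in Esnd; simpl in Esnd; lia). subst sn.
    assert (Htriv : forall x, B x -> psi x = (0%R, 0%Z)).
    { apply (halving P psi B l (conj (ginv s)) Hl Hdy).
      - intros x Bx. rewrite Esnd, (HB x Bx). reflexivity.
      - intros x Bx. apply Hdesc, Hconj in Bx. destruct Bx as [y [Ay ->]].
        change (B (conj (ginv s) (conj s y))). rewrite <- conj_comp, gmul_Vr, conj_one_l. auto.
      - intros x Bx. rewrite hom_conj, hom_inv, Es. destruct (psi x) as [r n] eqn:Ex.
        assert (n = 0%Z) by (specialize (Esnd x); rewrite Ex, (HB x Bx) in Esnd; simpl in Esnd; lia). subst n.
        unfold conj; simpl; unfold qmul, qinv; simpl. field. }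
    destruct (HU Q1 (fun x => psi x) (psi s)) as [F [_ [_ U]]].
    { intros; apply hmul. }
    { intros. rewrite !hmul, hom_inv. reflexivity. }
    pose (C := {| hfun := fun x => conj (psi s) (psi x);
                  hmul := fun x y => eq_trans (f_equal (conj (psi s)) (hmul _ _ psi x y)) (conj_mul Q1 _ _ _) |} : Hom P Q1).
    assert (E1 := U psi (fun _ _ => eq_refl) eq_refl a).
    assert (E2 := U C (fun x Bx => ltac:(simpl; rewrite (Htriv x Bx); apply (conj_one_r Q1))) (conj_self Q1 _) a).
    simpl in E2. rewrite <- E1, Pa, Es in E2. unfold conj in E2; simpl in E2; unfold qmul, qinv in E2; simpl in E2.
    injection E2 as E2. field_simplify in E2. lra.
Qed.

Theorem proposition4p2 (P : Group) (t a b : P) (phi : Hom P Zgroup) :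
  is_pi_presentation P t a b ->
  phi t = 1%Z -> phi a = 0%Z -> phi b = 0%Z ->
  rank_gradient_is phi 0%R /\ ~ asc_or_desc_HNN_compatible P phi.
Proof.
  intros HP Ht Ha Hb. split. eapply rg_zero; eauto. eapply not_HNN; eauto.
Qed.
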